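(* Assume $\sum_{i=1}^M b_i\ge1$ and let $\mathbf r^\star(\epsilon)$ be the energy-adequate solution. Then $\lim_{\epsilon\to0^+}|\bar\Delta(\mathbf r^\star(\epsilon))-\bar\Delta_{\mathrm{opt}}(\epsilon)|=0$, and $$\lim_{\epsilon\to0^+}\bar\Delta_{\mathrm{opt}}(\epsilon)=\sum_{i=1}^M\Big[\frac{w_i}{\min\{b_i,\beta^\star\sqrt{w_i}\}}+w_i\Big].$$
   Context: Fix an integer $M\ge1$, weights $w_1,\dots,w_M>0$, constants $b_1,\dots,b_M>0$, and $\epsilon>0$. For $\mathbf r\in(0,\infty)^M$ write $S(\mathbf r)=\sum_{i=1}^M r_i$ and define $$\bar\Delta(\mathbf r)=\sum_{l=1}^M \frac{w_l e^{-r_l\epsilon}}{r_l}\, e^{\epsilon S(\mathbf r)}\big(1+S(\mathbf r)\big)+\sum_{l=1}^M w_l,\qquad \sigma_l(\mathbf r)=\frac{(1-e^{-r_l\epsilon})S(\mathbf r)+r_le^{-r_l\epsilon}}{S(\mathbf r)+1}.$$ Problem 1: minimize $\bar\Delta(\mathbf r)$ over $\mathbf r\in(0,\infty)^M$ subject to $\sigma_l(\mathbf r)\le b_l$ for all $l$; its optimal (infimum) value is $\bar\Delta_{\mathrm{opt}}(\epsilon)$. Energy-adequate solution (when $\sum_i b_i\ge1$): let $\beta^\star\in[0,\max_l b_l/\sqrt{w_l}]$ be the root of $\sum_{i=1}^M\min\{b_i,\beta^\star\sqrt{w_i}\}=1$, let $x^\star=-\tfrac12+\sqrt{\tfrac14+\tfrac1\epsilon}$,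 and set $r^\star_l=\min\{b_l,\beta^\star\sqrt{w_l}\}\,x^\star$. *)

(* Defs.v *)
From Stdlib Require Import Reals Lra.
Open Scope R_scope.

(* Indices 1..M of the paper are 0..M-1 here. *)
Fixpoint sumR (n : nat) (f : nat -> R) : R :=
  match n with
  | O => 0
  | S k => sumR k f + f k
  end.

Definition Ssum (M : nat) (r : nat -> R) : R := sumR M r.

Definition DeltaBar (M : nat) (w : nat -> R) (eps : R) (r : nat -> R) : R :=
  sumR M (fun l => w l * exp (- (r l * eps)) / r l)
    * exp (eps * Ssum M r) * (1 + Ssum M r)
  + sumR M w.

Definition sigma (M : nat) (eps : R) (r : nat -> R) (l : nat) : R :=
  ((1 - exp (- (r l * eps))) * Ssum M r + r l * exp (- (r l * eps)))
    / (Ssum M r + 1).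

Definition feasible (M : nat) (b : nat -> R) (eps : R) (r : nat -> R) : Prop :=
  (forall i, (i < M)%nat -> 0 < r i) /\
  (forall l, (l < M)%nat -> sigma M eps r l <= b l).

Definition objective_values (M : nat) (w b : nat -> R) (eps : R) : R -> Prop :=
  fun v => exists r, feasible M b eps r /\ v = DeltaBar M w eps r.

Definition xstar (eps : R) : R := - / 2 + sqrt (/ 4 + / eps).

Definition rstar (w b : nat -> R) (beta eps : R) (l : nat) : R :=
  Rmin (b l) (beta * sqrt (w l)) * xstar eps.

Definition is_inf (E : R -> Prop) (m : R) : Prop :=
  (forall x, E x -> m <= x) /\ (forall m', (forall x, E x -> m' <= x) -> m' <= m).

(* Main.v *)
Require Import Defs.
From Stdlib Require Import Reals Lra Lia.
Open Scope R_scope.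

Lemma sumR_ext n f g : (forall i, (i < n)%nat -> f i = g i) -> sumR n f = sumR n g.
Proof. induction n; simpl; intros H; [reflexivity|]. rewrite IHn by (intros; apply H; lia). rewrite H by lia. reflexivity. Qed.

Lemma sumR_le n f g : (forall i, (i < n)%nat -> f i <= g i) -> sumR n f <= sumR n g.
Proof. induction n; simpl; intros H; [lra|]. assert (sumR n f <= sumR n g) by (apply IHn; intros; apply H; lia). assert (f n <= g n) by (apply H; lia). lra. Qed.

Lemma sumR_plus n f g : sumR n (fun i => f i + g i) = sumR n f + sumR n g.
Proof. induction n; simpl; [ring|]. rewrite IHn; ring. Qed.

Lemma sumR_scal n k f : sumR n (fun i => k * f i) = k * sumR n f.
Proof. induction n; simpl; [ring|]. rewrite IHn; ring. Qed.

Lemma sumR_minus n f g : sumR n (fun i => f i - g i) = sumR n f - sumR n g.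
Proof. induction n; simpl; [ring|]. rewrite IHn; ring. Qed.

Lemma sumR_nonneg n f : (forall i, (i < n)%nat -> 0 <= f i) -> 0 <= sumR n f.
Proof. intros H. replace 0 with (sumR n (fun _ => 0)). apply sumR_le; auto.
 clear H; induction n; simpl; [ring|]. rewrite IHn; ring. Qed.

Lemma sumR_single n f l : (l < n)%nat -> (forall i, (i < n)%nat -> 0 <= f i) -> f l <= sumR n f.
Proof. induction n; simpl; intros Hl H; [lia|].
 destruct (Nat.eq_dec l n) as [->|Hne].
 - assert (0 <= sumR n f) by (apply sumR_nonneg; intros; apply H; lia). lra.
 - assert (f l <= sumR n f) by (apply IHn; [lia| intros; apply H; lia]).
   assert (0 <= f n) by (apply H; lia). lra. Qed.

Lemma exp_le_mono a b : a <= b -> exp a <= exp b.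
Proof. intros H; destruct (Rle_lt_or_eq_dec _ _ H) as [h|h]. left; apply exp_increasing; auto. subst; lra. Qed.

Lemma exp_le1 a : a <= 0 -> exp a <= 1.
Proof. intros; rewrite <- exp_0; apply exp_le_mono; auto. Qed.

Lemma tangent (w y b beta : R) : 0 < w -> 0 < y -> y <= b -> 0 < beta ->
  w / Rmin b (beta * sqrt w) + (Rmin b (beta * sqrt w) - y) / (beta * beta) <= w / y.
Proof.
  intros Hw Hy Hyb Hbe.
  assert (Hs : 0 < sqrt w) by (apply sqrt_lt_R0; auto).
  assert (Hss : sqrt w * sqrt w = w) by (apply sqrt_sqrt; lra).
  set (s := sqrt w) in *.
  assert (Hc : 0 < Rmin b (beta * s)).
  { apply Rmin_case_strong; intros; [lra| apply Rmult_lt_0_compat; auto]. }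
  set (c := Rmin b (beta * s)) in *.
  assert (Hgen : w / c + w / (c*c) * (c - y) <= w / y).
  { assert (w / y - (w / c + w / (c*c) * (c - y)) = w * ((c - y) * (c - y)) / (y * c * c)) by (field; lra).
    assert (0 <= w * ((c - y) * (c - y)) / (y * c * c)).
    { unfold Rdiv. apply Rmult_le_pos. apply Rmult_le_pos; [lra| pose proof (Rle_0_sqr (c-y)) as Hq; unfold Rsqr in Hq; lra].
      left; apply Rinv_0_lt_compat. apply Rmult_lt_0_compat; [|lra]. apply Rmult_lt_0_compat; lra. }
    lra. }
  assert (Hcmp : (c - y) / (beta * beta) <= w / (c*c) * (c - y)).
  { unfold c; apply Rmin_case_strong; intros Hm.
    -       assert (Hd : w / (b*b) - / (beta*beta) = (w * (beta*beta) - b*b) / (b*b*(beta*beta))) by (field; lra).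
      assert (0 <= (w * (beta*beta) - b*b) / (b*b*(beta*beta))).
      { unfold Rdiv; apply Rmult_le_pos.
        - rewrite <- Hss. assert (b*b <= (beta*s)*(beta*s)) by (apply Rmult_le_compat; lra). nra.
        - left; apply Rinv_0_lt_compat. assert (0 < b) by lra. assert (0 < b*b) by nra. assert (0<beta*beta) by nra. nra. }
      assert (0 <= b - y) by lra.
      assert (0 <= (b - y) * (w / (b*b) - / (beta*beta))) by (apply Rmult_le_pos; lra).
      unfold Rdiv in *. nra.
    - right. rewrite <- Hss. field. lra. }
  lra.
Qed.

Lemma squeeze (f g : R -> R) (l : R) : continuity_pt g 0 -> g 0 = 0 ->
  (forall e, 0 < e -> Rabs (f e - l) <= g e) -> limit1_in f (fun e => 0 < e) l 0.
Proof.
  intros Hc Hg0 H eps Heps. destruct (Hc eps Heps) as [alp [Ha Hal]].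
  exists alp; split; auto. intros x [Hx Hd]. simpl in *. unfold R_dist in *.
  assert (Hx' : D_x no_cond 0 x /\ Rabs (x - 0) < alp) by (split; [split; [exact I| lra] | auto]).
  specialize (Hal x Hx'). simpl in Hal. unfold R_dist in Hal. rewrite Hg0 in Hal.
  specialize (H x Hx). rewrite Rminus_0_r in Hal.
  assert (g x <= Rabs (g x)) by apply Rle_abs. lra.
Qed.

Lemma xstar_facts eps : 0 < eps -> 0 < xstar eps /\ eps * (xstar eps * xstar eps) + eps * xstar eps = 1
  /\ eps * xstar eps <= sqrt (eps * eps / 4 + eps).
Proof.
  intros He. unfold xstar.
  assert (Hp : 0 < / 4 + / eps) by (assert (0 < /eps) by (apply Rinv_0_lt_compat; lra); lra).
  assert (Hss : sqrt (/4 + /eps) * sqrt (/4 + /eps) = /4 + /eps) by (apply sqrt_sqrt; lra).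
  assert (Hs0 : 0 <= sqrt (/4 + /eps)) by apply sqrt_pos.
  set (s := sqrt (/4 + /eps)) in *.
  assert (0 < /eps) by (apply Rinv_0_lt_compat; lra).
  split; [| split].
  - assert (s > /2) by nra. lra.
  - replace (eps * ((- / 2 + s) * (- / 2 + s)) + eps * (- / 2 + s)) with (eps * (s*s - /4)) by field.
    rewrite Hss. field. lra.
  - assert (E : eps * eps / 4 + eps = (eps * s) * (eps * s)).
    { replace ((eps * s) * (eps * s)) with (eps*eps*(s*s)) by ring. rewrite Hss. field. lra. }
    rewrite E, sqrt_square by nra. nra.
Qed.

Theorem corollary1 (M : nat) (w b : nat -> R) (beta : R) (Dopt : R -> R)
  (HM : (1 <= M)%nat)
  (Hw : forall i, (i < M)%nat -> 0 < w i)
  (Hb : forall i, (i < M)%nat -> 0 < b i)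
  (Hsumb : 1 <= sumR M b)
  (Hbeta0 : 0 <= beta)
  (Hbeta1 : exists l, (l < M)%nat /\ beta <= b l / sqrt (w l))
  (Hbeta : sumR M (fun i => Rmin (b i) (beta * sqrt (w i))) = 1)
  (HDopt : forall eps, 0 < eps -> is_inf (objective_values M w b eps) (Dopt eps)) :
  limit1_in (fun eps => Rabs (DeltaBar M w eps (rstar w b beta eps) - Dopt eps))
            (fun eps => 0 < eps) 0 0
  /\
  limit1_in Dopt (fun eps => 0 < eps)
            (sumR M (fun i => w i / Rmin (b i) (beta * sqrt (w i)) + w i)) 0.
Proof.
  set (c := fun i => Rmin (b i) (beta * sqrt (w i))) in *.
  assert (Hbe : 0 < beta).
  { destruct (Rle_lt_or_eq_dec _ _ Hbeta0) as [h|h]; auto. exfalso.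
    assert (sumR M c = 0).
    { replace 0 with (sumR M (fun _ => 0)).
      - apply sumR_ext. intros i Hi. unfold c. rewrite <- h, Rmult_0_l.
        apply Rmin_right. specialize (Hb i Hi). lra.
      - clear. induction M; simpl; [ring|]. rewrite IHM; ring. }
    lra. }
  assert (Hc : forall i, (i < M)%nat -> 0 < c i).
  { intros i Hi. unfold c. apply Rmin_case_strong; intros; auto.
    apply Rmult_lt_0_compat; auto. apply sqrt_lt_R0; auto. }
  set (A := sumR M (fun i => w i / c i)).
  set (W := sumR M w).
  assert (HA : 0 <= A).
  { apply sumR_nonneg. intros i Hi. specialize (Hw i Hi). specialize (Hc i Hi).
    unfold Rdiv; apply Rmult_le_pos; [lra| left; apply Rinv_0_lt_compat; auto]. }
  assert (HL : sumR M (fun i => w i / c i + w i) = A + W) by apply sumR_plus.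
  change (sumR M (fun i => w i / Rmin (b i) (beta * sqrt (w i)) + w i)) with (sumR M (fun i => w i / c i + w i)). rewrite HL.
  assert (Hlow : forall eps r, 0 < eps -> feasible M b eps r -> A + W <= DeltaBar M w eps r).
  { intros eps r He [Hr Hsig].
    unfold DeltaBar. fold W.
    set (S := Ssum M r).
    assert (HS : 0 <= S) by (apply sumR_nonneg; intros; left; auto).
    set (y := fun l => r l / (1 + S)).
    assert (Hy : forall l, (l < M)%nat -> 0 < y l /\ y l <= b l).
    { intros l Hl. pose proof (Hr l Hl) as Hrl. split.
      - unfold y, Rdiv. apply Rmult_lt_0_compat; auto. apply Rinv_0_lt_compat; lra.
      - specialize (Hsig l Hl). unfold Defs.sigma in Hsig. fold S in Hsig.
        assert (HrS : r l <= S) by (unfold S, Ssum; apply sumR_single; [auto | intros i Hi; left; apply Hr; auto]).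
        assert (HE : exp (- (r l * eps)) <= 1) by (apply exp_le1; nra).
        assert (r l <= (1 - exp (- (r l * eps))) * S + r l * exp (- (r l * eps))) by nra.
        unfold y. apply Rle_trans with (2 := Hsig). unfold Rdiv.
        rewrite (Rplus_comm S 1). apply Rmult_le_compat_r; auto.
        left; apply Rinv_0_lt_compat; lra. }
    assert (Hsy : sumR M y <= 1).
    { unfold y. rewrite (sumR_ext M _ (fun l => / (1+S) * r l)) by (intros; unfold Rdiv; ring).
      rewrite sumR_scal. fold (Ssum M r). fold S.
      apply Rmult_le_reg_l with (1+S); [lra|]. rewrite <- Rmult_assoc, Rinv_r by lra. lra. }
    assert (Step1 : sumR M (fun l => w l / y l) <=
        sumR M (fun l => w l * exp (- (r l * eps)) / r l) * exp (eps * S) * (1 + S)).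
    { rewrite Rmult_assoc, Rmult_comm, <- sumR_scal.
      apply sumR_le. intros l Hl. pose proof (Hr l Hl) as Hrl. specialize (Hw l Hl).
      assert (HrS : r l <= S) by (unfold S, Ssum; apply sumR_single; [auto | intros i Hi; left; apply Hr; auto]).
      assert (H1 : 1 <= exp (eps * S) * exp (- (r l * eps))).
      { rewrite <- exp_plus, <- exp_0. apply exp_le_mono. nra. }
      unfold y.
      replace (w l / (r l / (1 + S))) with (w l * (1+S) / r l * 1) by (field; lra).
      replace (exp (eps * S) * (1 + S) * (w l * exp (- (r l * eps)) / r l))
        with (w l * (1+S) / r l * (exp (eps * S) * exp (- (r l * eps)))) by (field; lra).
      apply Rmult_le_compat_l; auto.
      unfold Rdiv. apply Rmult_le_pos; [nra| left; apply Rinv_0_lt_compat; auto]. }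
    assert (Step2 : sumR M (fun l => w l / c l + (c l - y l) / (beta*beta)) <= sumR M (fun l => w l / y l)).
    { apply sumR_le. intros l Hl. destruct (Hy l Hl). unfold c. apply tangent; auto. }
    rewrite sumR_plus in Step2. fold A in Step2.
    rewrite (sumR_ext M _ (fun l => / (beta*beta) * (c l - y l))) in Step2 by (intros; unfold Rdiv; ring).
    rewrite sumR_scal, sumR_minus, Hbeta in Step2.
    assert (0 <= / (beta*beta) * (1 - sumR M y)).
    { apply Rmult_le_pos; [left; apply Rinv_0_lt_compat; nra| lra]. }
    lra. }
  set (u := fun e => sqrt (e * e / 4 + e)).
  set (g := fun e => A * (exp (u e) * (1 + u e + e) - 1)).
  assert (Hkey : forall eps, 0 < eps ->
     A + W <= Dopt eps /\ Dopt eps <= DeltaBar M w eps (rstar w b beta eps)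
     /\ DeltaBar M w eps (rstar w b beta eps) <= A + W + g eps).
  { intros eps He. destruct (xstar_facts eps He) as [Hx [Hxx Ht]].
    set (x := xstar eps) in *.
    assert (HSx : Ssum M (rstar w b beta eps) = x).
    { unfold Ssum, rstar. fold x.
      rewrite (sumR_ext M _ (fun l => x * c l)) by (intros; unfold c; ring).
      rewrite sumR_scal. fold c. rewrite Hbeta. ring. }
    assert (Hfeas : feasible M b eps (rstar w b beta eps)).
    { split.
      - intros i Hi. unfold rstar. apply Rmult_lt_0_compat; auto. apply (Hc i Hi).
      - intros l Hl. unfold Defs.sigma. rewrite HSx. unfold rstar. fold x.
        change (Rmin (b l) (beta * sqrt (w l))) with (c l).
        specialize (Hc l Hl). assert (Hcb : c l <= b l) by apply Rmin_l.
        set (E := exp (- (c l * x * eps))).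
        assert (HE1 : E <= 1) by (apply exp_le1; nra).
        assert (HE2 : 1 - c l * x * eps <= E) by (pose proof (exp_ineq1_le (- (c l * x * eps))); unfold E; lra).
        assert (Hn : (1 - E) * x + c l * x * E <= c l * (x + 1)).
        { assert ((1 - E) * x <= c l * x * eps * x) by (apply Rmult_le_compat_r; lra).
          assert (c l * x * E <= c l * x) by (assert (0 <= c l * x) by nra; nra).
          nra. }
        apply Rle_trans with (c l); auto.
        unfold Rdiv. apply Rmult_le_reg_r with (x+1); [lra|].
        rewrite Rmult_assoc, Rinv_l by lra. lra. }
    destruct (HDopt eps He) as [Hinf1 Hinf2].
    split; [| split].
    - apply Hinf2. intros v [r [Hr ->]]. apply Hlow; auto.
    - apply Hinf1. exists (rstar w b beta eps); split; auto.
    - unfold DeltaBar. fold W. rewrite HSx.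
      assert (Hix : eps * (x + 1) = / x).
      { apply Rmult_eq_reg_l with x; [| lra]. rewrite Rinv_r by lra. lra. }
      assert (Hsum : sumR M (fun l => w l * exp (- (rstar w b beta eps l * eps)) / rstar w b beta eps l)
                     <= / x * A).
      { unfold A. rewrite <- sumR_scal. apply sumR_le. intros l Hl. unfold rstar. fold x.
        change (Rmin (b l) (beta * sqrt (w l))) with (c l).
        specialize (Hc l Hl). specialize (Hw l Hl).
        assert (HE1 : exp (- (c l * x * eps)) <= 1) by (apply exp_le1; nra).
        replace (/ x * (w l / c l)) with (w l / (c l * x) * 1) by (field; lra).
        replace (w l * exp (- (c l * x * eps)) / (c l * x)) with (w l / (c l * x) * exp (- (c l * x * eps))) by (field; lra).
        apply Rmult_le_compat_l; auto. unfold Rdiv. apply Rmult_le_pos; [lra| left; apply Rinv_0_lt_compat; nra]. }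
      assert (Hpos : 0 <= exp (eps * x) * (1 + x)) by (pose proof (exp_pos (eps*x)); nra).
      assert (H1 : sumR M (fun l => w l * exp (- (rstar w b beta eps l * eps)) / rstar w b beta eps l)
                   * exp (eps * x) * (1 + x) <= A * exp (eps * x) * (1 + eps * x + eps)).
      { rewrite Rmult_assoc. apply Rle_trans with (/ x * A * (exp (eps * x) * (1 + x))).
        - apply Rmult_le_compat_r; auto.
        - right. replace (1 + eps * x + eps) with (1 + eps * (x+1)) by ring. rewrite Hix. field. lra. }
      assert (Hut : eps * x <= u eps) by exact Ht.
      assert (Hu0 : 0 <= eps * x) by nra.
      assert (H2 : A * exp (eps * x) * (1 + eps * x + eps) <= A * exp (u eps) * (1 + u eps + eps)).
      { rewrite !Rmult_assoc. apply Rmult_le_compat_l; auto.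
        apply Rmult_le_compat; try lra. left; apply exp_pos. apply exp_le_mono; auto. }
      unfold g. lra. }
  assert (Hcont : continuity_pt g 0).
  { assert (Hp : continuity_pt (fun e => e * e / 4 + e) 0) by (apply derivable_continuous_pt; reg).
    assert (Hu : continuity_pt u 0).
    { apply (continuity_pt_comp (fun e => e * e / 4 + e) sqrt 0 Hp).
      apply continuity_pt_sqrt. lra. }
    assert (Hexu : continuity_pt (fun e => exp (u e)) 0).
    { apply (continuity_pt_comp u exp 0 Hu). apply derivable_continuous_pt, derivable_pt_exp. }
    assert (Hid : continuity_pt (fun e => e) 0) by (apply derivable_continuous_pt; reg).
    assert (Hcst : forall k, continuity_pt (fun _ => k) 0) by (intros; apply continuity_pt_const; intros ? ?; reflexivity).
    unfold g.
    apply (continuity_pt_mult (fun _ => A) (fun e => exp (u e) * (1 + u e + e) - 1) 0); auto.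
    apply (continuity_pt_minus (fun e => exp (u e) * (1 + u e + e)) (fun _ => 1) 0); auto.
    apply (continuity_pt_mult (fun e => exp (u e)) (fun e => 1 + u e + e) 0); auto.
    apply (continuity_pt_plus (fun e => 1 + u e) (fun e => e) 0); auto.
    apply (continuity_pt_plus (fun e => 1) u 0); auto. }
  assert (Hg0 : g 0 = 0).
  { unfold g, u. replace (0 * 0 / 4 + 0) with 0 by field. rewrite sqrt_0, exp_0. ring. }
  split.
  - apply (squeeze _ g); auto. intros e He. destruct (Hkey e He) as [H1 [H2 H3]].
    rewrite Rminus_0_r, Rabs_Rabsolu, Rabs_right by lra. lra.
  - apply (squeeze _ g); auto. intros e He. destruct (Hkey e He) as [H1 [H2 H3]].
    rewrite Rabs_right by lra. lra.
Qed.
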